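(* There is a positive absolute constant $C_0$ such that whenever $n\geq 2$, $D$ is a domain in $\mathbb{R}^n$ such that $\mathbb{R}^n\setminus D$ contains at least two points, and $z\in D$, we have $$\lambda''_D(z)\leq\lambda'_D(z)\leq\lambda_D(z)\leq C_0\,\lambda''_D(z)$$ and $$\lambda_D(z)\leq\frac{1}{d(z,\partial D)}.$$
   Context: Write $d(z,\partial D)=\inf\{|z-a|:a\in\partial D\}$ and $Q(z;a,b)=|z-a|\big(1+\big|\log\frac{|a-b|}{|z-a|}\big|\big)$ (equal to $+\infty$ when $a=b$). For $z\in D$ define $1/\lambda_D(z)=\inf\{Q(z;a,b): a,b\in\mathbb{R}^n\setminus D\}$, $1/\lambda'_D(z)=\inf\{Q(z;a,b): a,b\in\partial D\}$, $1/\lambda''_D(z)=\inf\{Q(z;a,b): a,b\in\partial D,\ |z-a|=d(z,\partial D)\}$. *)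

(* Defs.v *)
From HB Require Import structures.
From mathcomp Require Import all_boot all_order all_algebra.
From mathcomp Require Import all_classical all_reals all_analysis.
Set Implicit Arguments. Unset Strict Implicit. Unset Printing Implicit Defensive.
Import Order.TTheory GRing.Theory Num.Theory.
Import numFieldNormedType.Exports.
Local Open Scope classical_set_scope.
Local Open Scope ring_scope.

(* Points of R^n are row vectors 'rV[R]_n (product = Euclidean topology). *)
Definition enorm (R : realType) (n : nat) (x : 'rV[R]_n) : R :=
  Num.sqrt (\sum_(i < n) x ord0 i ^+ 2).

Definition edist (R : realType) (n : nat) (x y : 'rV[R]_n) : R := enorm (x - y).

Definition bdry (R : realType) (n : nat) (D : set 'rV[R]_n) : set 'rV[R]_n :=
  closure D `\` interior D.

Definition dist_bdry (R : realType) (n : nat) (D : set 'rV[R]_n) (z : 'rV[R]_n) : R :=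
  fine (ereal_inf [set (edist z a)%:E | a in bdry D]).

Definition Qf (R : realType) (n : nat) (z a b : 'rV[R]_n) : \bar R :=
  if a == b then +oo%E
  else (edist z a * (1 + `| ln (edist a b / edist z a) |))%:E.

Definition inv_lam (R : realType) (n : nat) (D : set 'rV[R]_n) (z : 'rV[R]_n) : \bar R :=
  ereal_inf [set Qf z ab.1 ab.2 | ab in [set ab | ~ D ab.1 /\ ~ D ab.2]].
Definition inv_lam' (R : realType) (n : nat) (D : set 'rV[R]_n) (z : 'rV[R]_n) : \bar R :=
  ereal_inf [set Qf z ab.1 ab.2 | ab in [set ab | bdry D ab.1 /\ bdry D ab.2]].
Definition inv_lam'' (R : realType) (n : nat) (D : set 'rV[R]_n) (z : 'rV[R]_n) : \bar R :=
  ereal_inf [set Qf z ab.1 ab.2 | ab in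
    [set ab | bdry D ab.1 /\ bdry D ab.2 /\ edist z ab.1 = dist_bdry D z]].

Definition lam (R : realType) (n : nat) (D : set 'rV[R]_n) z : R := (fine (inv_lam D z))^-1.
Definition lam' (R : realType) (n : nat) (D : set 'rV[R]_n) z : R := (fine (inv_lam' D z))^-1.
Definition lam'' (R : realType) (n : nat) (D : set 'rV[R]_n) z : R := (fine (inv_lam'' D z))^-1.

(* Main.v *)
Require Import Defs.
From HB Require Import structures.
From mathcomp Require Import all_boot all_order all_algebra.
From mathcomp Require Import all_classical all_reals all_analysis.
From mathcomp Require Import ring lra.
Set Implicit Arguments. Unset Strict Implicit. Unset Printing Implicit Defensive.
Import Order.TTheory GRing.Theory Num.Theory.
Import numFieldNormedType.Exports.
Local Open Scope classical_set_scope.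
Local Open Scope ring_scope.
Local Notation edist := Defs.edist.
Section Euc.
Variable (R : realType) (n : nat).
Implicit Types x y : 'rV[R]_n.
Definition dot x y : R := \sum_(i < n) x ord0 i * y ord0 i.
Lemma dotC x y : dot x y = dot y x.
Proof. by apply: eq_bigr => i _; rewrite mulrC. Qed.
Lemma dotDl x y w : dot (x + y) w = dot x w + dot y w.
Proof. by rewrite /dot -big_split; apply: eq_bigr => i _; rewrite !mxE mulrDl. Qed.
Lemma dotZl k x y : dot (k *: x) y = k * dot x y.
Proof. by rewrite /dot mulr_sumr; apply: eq_bigr => i _; rewrite !mxE mulrA. Qed.
Lemma dotNl x y : dot (- x) y = - dot x y.
Proof. by rewrite -scaleN1r dotZl mulN1r. Qed.
Lemma dotBl x y w : dot (x - y) w = dot x w - dot y w.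
Proof. by rewrite dotDl dotNl. Qed.
Lemma dotDr x y w : dot w (x + y) = dot w x + dot w y.
Proof. by rewrite dotC dotDl !(dotC w). Qed.
Lemma dotZr k x y : dot y (k *: x) = k * dot y x.
Proof. by rewrite dotC dotZl dotC. Qed.
Lemma dotBr x y w : dot w (x - y) = dot w x - dot w y.
Proof. by rewrite dotC dotBl !(dotC w). Qed.
Lemma dot_ge0 x : 0 <= dot x x.
Proof. by apply: sumr_ge0 => i _; rewrite -expr2 sqr_ge0. Qed.
Lemma dot_eq0 x : dot x x = 0 -> x = 0.
Proof.
move=> /eqP; rewrite psumr_eq0; last by move=> i _; rewrite -expr2 sqr_ge0.
move=> /allP H; apply/rowP => i; rewrite mxE; apply/eqP.
by have := H i (mem_index_enum _); rewrite -expr2 sqrf_eq0 ord1.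
Qed.
Lemma enormE x : enorm x = Num.sqrt (dot x x).
Proof. by rewrite /enorm /dot; congr Num.sqrt; apply: eq_bigr => i _; rewrite expr2. Qed.
Lemma enorm_ge0 x : 0 <= enorm x.
Proof. by rewrite enormE sqrtr_ge0. Qed.
Lemma enorm_sq x : enorm x ^+ 2 = dot x x.
Proof. by rewrite enormE sqr_sqrtr // dot_ge0. Qed.
Lemma CS2 x y : dot x y ^+ 2 <= dot x x * dot y y.
Proof.
have [y0|yp] := eqVneq (dot y y) 0.
  have d0 : dot x y = 0 by rewrite (dot_eq0 y0) /dot big1 // => i _; rewrite mxE mulr0.
  by rewrite d0 y0 mulr0 expr0n.
have ypos : 0 < dot y y by rewrite lt_def yp dot_ge0.
have H := dot_ge0 (dot y y *: x - dot x y *: y).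
rewrite !(dotBl, dotBr, dotZl, dotZr) (dotC y x) in H.
have : 0 <= dot y y * (dot y y * dot x x - dot x y ^+ 2) by lra.
by rewrite pmulr_rge0 // subr_ge0 mulrC.
Qed.
Lemma CS x y : `|dot x y| <= enorm x * enorm y.
Proof.
rewrite -ler_sqr ?nnegrE ?mulr_ge0 ?enorm_ge0 //.
by rewrite real_normK ?num_real // exprMn !enorm_sq CS2.
Qed.
Lemma dot_le x y : dot x y <= enorm x * enorm y.
Proof. exact: le_trans (ler_norm _) (CS x y). Qed.
Lemma enormD x y : enorm (x + y) <= enorm x + enorm y.
Proof.
rewrite -ler_sqr ?nnegrE ?addr_ge0 ?enorm_ge0 // enorm_sq.
rewrite !(dotDl, dotDr) sqrrD !enorm_sq (dotC y x).
have := dot_le x y; lra.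
Qed.
Lemma enormZ k x : enorm (k *: x) = `|k| * enorm x.
Proof.
by rewrite !enormE dotZl dotZr mulrA -expr2 sqrtrM ?sqr_ge0 // sqrtr_sqr.
Qed.
Lemma enormN x : enorm (- x) = enorm x.
Proof. by rewrite -scaleN1r enormZ normrN1 mul1r. Qed.
Lemma enormB x y : enorm (x - y) = enorm (y - x).
Proof. by rewrite -enormN opprB. Qed.
Lemma enorm0 : enorm (0 : 'rV[R]_n) = 0.
Proof. by rewrite -(scale0r 0) enormZ normr0 mul0r. Qed.
Lemma enorm_eq0 x : enorm x = 0 -> x = 0.
Proof. by rewrite enormE => /eqP; rewrite sqrtr_eq0 => H; apply: dot_eq0; apply/le_anti; rewrite H dot_ge0. Qed.
Lemma coord_le x i : `|x ord0 i| <= enorm x.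
Proof.
rewrite -ler_sqr ?nnegrE ?enorm_ge0 // enorm_sq real_normK ?num_real //.
rewrite /dot (bigD1 i) //= expr2 lerDl; apply: sumr_ge0 => j _; rewrite -expr2 sqr_ge0 //.
Qed.
Lemma mxnorm_le x : `|x| <= enorm x.
Proof.
rewrite (_ : `|x| = mx_norm x) // mx_normrE; apply/bigmax_leP; split; first exact: enorm_ge0.
by move=> [i j] _ /=; rewrite ord1; apply: coord_le.
Qed.
Lemma enorm_le_mx x : enorm x <= n.+1%:R * `|x|.
Proof.
rewrite -ler_sqr ?nnegrE ?mulr_ge0 ?enorm_ge0 // enorm_sq.
have H i : x ord0 i * x ord0 i <= `|x| ^+ 2.
  rewrite -expr2 -real_normK ?num_real // ler_sqr ?nnegrE //.
  by rewrite (_ : `|x| = mx_norm x) // mx_normrE; apply/bigmax_geP; right; exists (ord0, i).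
apply: le_trans (ler_sum _ (fun i _ => H i)) _.
rewrite sumr_const card_ord exprMn -[X in X <= _]mulr_natl ler_wpM2r ?sqr_ge0 //.
by rewrite -natrX ler_nat expnS; apply: leq_trans (leqnSn n) _; apply: leq_pmulr.
Qed.
End Euc.
Section Topo.
Variable (R : realType) (n : nat).
Implicit Types (x y p q z : 'rV[R]_n) (D : set 'rV[R]_n).

Lemma open_enorm D z : open D -> D z ->
  exists2 e : R, 0 < e & forall y, enorm (y - z) < e -> D y.
Proof.
rewrite openE => oD Dz; have /nbhs_ballP[e e0 sub] := oD z Dz.
exists e => // y ye; apply: sub; rewrite -ball_normE /ball_ /=.
by apply: le_lt_trans (mxnorm_le _) _; rewrite enormB.
Qed.

Lemma bdry_notD D x : open D -> bdry D x -> ~ D x.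
Proof. by rewrite openE => oD [_ nI] Dx; apply: nI; apply: oD. Qed.

Lemma seg_cont p q : continuous (fun t : R => p + t *: (q - p)).
Proof.
move=> t; apply: cvgD; first exact: cvg_cst.
exact: scalel_continuous.
Qed.

Lemma exit D p q : open D -> D p -> ~ D q ->
  exists2 t : R, 0 <= t <= 1 & bdry D (p + t *: (q - p)).
Proof.
move=> oD Dp nDq; apply: contrapT => H.
set g := fun t : R => p + t *: (q - p).
have cA : connected (g @` `[0, 1]).
  apply: connected_continuous_connected; first exact: segment_connected.
  exact/continuous_subspaceT/seg_cont.
have key : (g @` `[0, 1]) `&` D = g @` `[0, 1].
  apply: cA.
  - exists p; split => //; exists 0; first by rewrite /= in_itv /= lexx ler01.
    by rewrite /g scale0r addr0.
  - by exists D.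
  - exists (closure D); first exact: closed_closure.
    apply/seteqP; split => x [Ax Bx]; split => //; first exact: subset_closure.
    apply: contrapT => nDx; apply: H; case: Ax => t t01 gt.
    exists t; first by move: t01; rewrite /= in_itv.
    rewrite -/(g t) gt; split => // /interior_subset //.
have : (g @` `[0, 1]) q.
  by exists 1; [rewrite /= in_itv /= lexx ler01 | rewrite /g scale1r addrC subrK].
by rewrite -key => -[].
Qed.
End Topo.
Section Near.
Variable (R : realType) (n : nat).
Implicit Types (x y p q z : 'rV[R]_n) (D : set 'rV[R]_n).

Lemma edist_cont z : continuous (fun y => edist z y).
Proof.
move=> x; apply/(@cvgrPdist_lt _ _ _ (nbhs (x : 'rV[R]_n)) (nbhs_filter _)) => e e0.
apply/nbhs_ballP; exists (e / n.+1%:R); first by rewrite /= divr_gt0.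
move=> y; rewrite -ball_normE /ball_ /= => hxy.
have h1 : enorm (x - y) < e.
  apply: le_lt_trans (enorm_le_mx _) _.
  by rewrite mulrC -ltr_pdivlMr.
have t1 := enormD (z - y) (y - x).
have t2 := enormD (z - x) (x - y).
rewrite /edist; rewrite (_ : z - y + (y - x) = z - x) in t1; last by rewrite addrA subrK.
rewrite (_ : z - x + (x - y) = z - y) in t2; last by rewrite addrA subrK.
rewrite (enormB y x) in t1.
rewrite ltr_norml; apply/andP; split; lra.
Qed.

Lemma closed_bdry D : closed (bdry D).
Proof.
rewrite /bdry setDE; apply: closedI; first exact: closed_closure.
exact/open_closedC/open_interior.
Qed.

Lemma nearest D z : (exists y, bdry D y) ->
  exists a0, bdry D a0 /\ forall y, bdry D y -> edist z a0 <= edist z y.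
Proof.
move=> [y1 By1].
set K := bdry D `&` (edist z @^-1` [set r | r <= edist z y1]).
have K0 : K !=set0 by exists y1; split => //=.
have cK : compact K.
  apply: bounded_closed_compact.
    exists (enorm z + edist z y1); split; first exact: num_real.
    move=> M hM y [_ Ky]; apply: le_trans (mxnorm_le _) _.
    have := enormD z (y - z); rewrite addrC subrK => h.
    have Ky' : edist z y <= edist z y1 by exact: Ky.
    rewrite /edist (enormB y z) in h Ky'.
    rewrite /edist in hM; rewrite /=; lra.
  apply: closedI; first exact: closed_bdry.
  apply: preimage_closed; last exact: closed_le.
  by move=> x _; apply: edist_cont.
have [c cKc cmin] := EVT_min_rV K0 cK (continuous_subspaceT (@edist_cont z)).
move: cKc; rewrite inE => -[Bc Kc]; exists c; split => // y By.
have [hy|hy] := leP (edist z y) (edist z y1).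
  by apply: cmin; rewrite inE.
apply: le_trans (ltW hy); apply: cmin; rewrite inE; split => //=.
Qed.
End Near.
Section Perp.
Variable (R : realType) (n : nat).
Implicit Types (x y v w e : 'rV[R]_n).

Definition ev (i : 'I_n) : 'rV[R]_n := \row_j ((j == i)%:R).
Lemma dot_ev i x : dot (ev i) x = x ord0 i.
Proof.
rewrite /dot (bigD1 i) //= !mxE eqxx mul1r big1 ?addr0 // => j ji.
by rewrite !mxE (negbTE ji) mul0r.
Qed.

Lemma normalize x : x != 0 -> dot ((enorm x)^-1 *: x) ((enorm x)^-1 *: x) = 1.
Proof.
move=> x0; rewrite dotZl dotZr -enorm_sq mulrA -expr2 -exprMn mulVf //.
  by rewrite expr1n.
by apply/eqP => /enorm_eq0 /eqP; apply/negP.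
Qed.

Lemma perp_ex w : (2 <= n)%N -> w != 0 -> exists v, dot v v = 1 /\ dot v w = 0.
Proof.
move=> n2 w0.
have ww0 : dot w w != 0 by apply/eqP => /dot_eq0 /eqP; apply/negP.
pose f i := dot w w *: ev i - dot (ev i) w *: w.
have fw i : dot (f i) w = 0.
  by rewrite /f dotBl !dotZl dotC; rewrite mulrC subrr.
suff [i fi] : exists i, f i != 0.
  exists ((enorm (f i))^-1 *: f i); split; first exact: normalize.
  by rewrite dotZl fw mulr0.
have h0 : (0 < n)%N by apply: leq_trans n2.
pose i0 := Ordinal h0; pose i1 := Ordinal n2.
apply: contrapT => H.
have F i : f i = 0 by apply: contrapT => fi; apply: H; exists i; apply/eqP.
have c i j : dot w w * (ev i) ord0 j = w ord0 i * w ord0 j.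
  have := congr1 (fun m : 'rV[R]_n => m ord0 j) (F i).
  by rewrite /f !mxE dot_ev => /eqP; rewrite subr_eq0 => /eqP.
have c00 := c i0 i0; have c11 := c i1 i1; have c01 := c i0 i1.
rewrite !mxE eqxx /= in c00 c11; rewrite !mxE /= in c01.
rewrite mulr1 in c00 c11; rewrite mulr0 in c01.
have : w ord0 i0 * w ord0 i1 != 0.
  rewrite mulf_neq0 //; apply/eqP => h.
    by move: ww0; rewrite c00 h mul0r eqxx.
  by move: ww0; rewrite c11 h mul0r eqxx.
by rewrite -c01 eqxx.
Qed.
End Perp.
Section Span.
Variable (R : realType) (n : nat).
Implicit Types (x y v w e : 'rV[R]_n).

Lemma span2 w e : (2 <= n)%N -> w != 0 -> exists v,
  [/\ dot v v = 1, dot v w = 0, 0 <= dot e v &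
      enorm e * enorm w <= `|dot e w| + enorm w * dot e v].
Proof.
move=> n2 w0.
have Wpos : 0 < enorm w.
  rewrite lt_def enorm_ge0 andbT; apply/eqP => /enorm_eq0 /eqP; apply/negP => //.
have ww : dot w w = enorm w ^+ 2 by rewrite enorm_sq.
have ee : dot e e = enorm e ^+ 2 by rewrite enorm_sq.
have cs := CS e w.
have Eg := enorm_ge0 e.
pose f := dot w w *: e - dot e w *: w.
have fw : dot f w = 0 by rewrite /f dotBl !dotZl mulrC subrr.
have [f0|f0] := eqVneq f 0.
  have [v [vv vw]] := perp_ex n2 w0.
  have H : dot w w *: e = dot e w *: w by apply/eqP; rewrite -subr_eq0; apply/eqP.
  have ev0 : dot e v = 0.
    have := congr1 (fun m => dot m v) H; rewrite !dotZl (dotC w v) vw mulr0.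
    move/eqP; rewrite mulf_eq0 ww sqrf_eq0 (gt_eqF Wpos) /= (dotC e v) => /eqP //.
  exists v; split => //; first by rewrite ev0.
  have := congr1 (@enorm _ _) H; rewrite !enormZ ww ger0_norm ?sqr_ge0 //.
  rewrite ev0 mulr0 addr0 => h.
  have : enorm w * (enorm w * enorm e - `|dot e w|) = 0.
    by rewrite mulrBr mulrA -expr2 h mulrC subrr.
  move/eqP; rewrite mulf_eq0 (gt_eqF Wpos) /= subr_eq0 => /eqP h2.
  by rewrite mulrC h2.
pose G := dot w w * dot e e - dot e w ^+ 2.
have ff : dot f f = dot w w * G.
  rewrite /f /G !(dotBl, dotBr, dotZl, dotZr) (dotC w e); ring.
have fpos : 0 < enorm f.
  rewrite lt_def enorm_ge0 andbT; apply/eqP => /enorm_eq0 /eqP; apply/negP => //.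
have ef : dot e f = G by rewrite /f /G dotBr !dotZr expr2 mulrC.
exists ((enorm f)^-1 *: f); split.
- exact: normalize.
- by rewrite dotZl fw mulr0.
- rewrite dotZr ef mulr_ge0 // ?invr_ge0 ?enorm_ge0 // /G ww ee.
  rewrite subr_ge0 -exprMn -real_normK ?num_real // ler_sqr ?nnegrE // mulrC //.
  by rewrite mulr_ge0 // enorm_ge0.
- rewrite dotZr ef.
  have fsq : enorm f ^+ 2 = enorm w ^+ 2 * G by rewrite enorm_sq ff ww.
  have GE : G = enorm w ^+ 2 * enorm e ^+ 2 - `|dot e w| ^+ 2.
    by rewrite /G ww ee real_normK ?num_real.
  have key : enorm w * ((enorm f)^-1 * G) = enorm f / enorm w.
    have -> : G = enorm f ^+ 2 / enorm w ^+ 2 by rewrite fsq mulrC mulKf // expf_neq0 // gt_eqF.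
    by field; rewrite !gt_eqF.
  rewrite key.
  set E := enorm e in cs Eg GE *; set W := enorm w in Wpos GE fsq key *.
  set F := enorm f in fpos fsq key *; set A := `|dot e w| in cs GE *.
  have A0 : 0 <= A by rewrite normr_ge0.
  suff h : E * W * W <= A * W + F.
    rewrite -(ler_pM2r Wpos) mulrDl mulfVK ?gt_eqF //.
  rewrite GE in fsq.
  have d0 : 0 <= E * W - A by rewrite subr_ge0.
  have h1 : (E * W - A) * (E * W - A) <= (E * W - A) * (E * W + A).
    by apply: ler_wpM2l => //; lra.
  have h2 : (E * W * W - A * W) ^+ 2 <= F ^+ 2.
    rewrite fsq.
    have -> : (E * W * W - A * W) ^+ 2 = W ^+ 2 * ((E * W - A) * (E * W - A)) by ring.
    have -> : W ^+ 2 * (W ^+ 2 * E ^+ 2 - A ^+ 2) = W ^+ 2 * ((E * W - A) * (E * W + A)) by ring.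
    by apply: ler_wpM2l => //; rewrite sqr_ge0.
  have : E * W * W - A * W <= F.
    rewrite -ler_sqr ?nnegrE //; last exact: ltW.
    by have := mulr_ge0 d0 (ltW Wpos); rewrite mulrBl.
  lra.
Qed.
End Span.
Lemma arith1 (R : realType) (d r t b a L : R) : 0 < d -> 0 <= r -> 0 <= b -> 0 <= t <= 1 ->
  d * r <= `|a| + d * b -> (1 - t) * d / 2 + t * b <= L ->
  `|(1 - t) * (d * d) + t * a| <= L * d -> Num.min d r / 6 <= L.
Proof.
move=> d0 r0 b0 /andP[t0 t1] hr hV hU.
have m1 : Num.min d r <= d by rewrite ge_min lexx.
have m2 : Num.min d r <= r by rewrite ge_min lexx orbT.
have htr : t * (d * r) <= t * (`|a| + d * b) by apply: ler_wpM2l.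
have tdb : 0 <= t * d * b by rewrite mulr_ge0 // mulr_ge0 // ltW.
have hdV : d * ((1 - t) * d / 2 + t * b) <= d * L by apply: ler_wpM2l => //; exact: ltW.
have key : t * (d * r) <= 3 * (L * d).
  have [a0|a0] := leP 0 a.
    rewrite ger0_norm // in htr.
    have := ler_norm ((1 - t) * (d * d) + t * a); nra.
  rewrite ltr0_norm // in htr.
  have := ler_norm (- ((1 - t) * (d * d) + t * a)); rewrite normrN.
  lra.
have key2 : t * r <= 3 * L.
  rewrite -(ler_pM2l d0).
  have -> : d * (t * r) = t * (d * r) by ring.
  by have -> : d * (3 * L) = 3 * (L * d) by ring.
have [th|th] := leP (1/2) t.
  have : r <= 2 * (t * r) by nra.
  lra.
have tb0 : 0 <= t * b by rewrite mulr_ge0.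
have : d / 4 <= (1 - t) * d / 2 by nra.
lra.
Qed.
Lemma arith2 (R : realType) (d r s rho L : R) : 0 < d -> d <= r -> 0 < s ->
  s / 2 <= rho -> rho <= 2 * r + s -> Num.min d rho / 6 <= L -> L <= 2 * d + rho ->
  d * (1 + `|ln (L / d)|) <= 20 * (r * (1 + `|ln (s / r)|)).
Proof.
move=> d0 dr s0 hr1 hr2 hL1 hL2.
have r0 : 0 < r by apply: lt_le_trans d0 dr.
have rho0 : 0 < rho by lra.
have m0 : 0 < Num.min d rho by rewrite lt_min d0 rho0.
have L0 : 0 < L by lra.
have lnle (x y : R) : 0 < x -> x <= y -> ln x <= ln y.
  move=> x0 xy; rewrite ler_ln // posrE //; exact: lt_le_trans xy.
have pos (x y : R) : 0 < x -> 0 < y -> 0 < x / y by move=> ? ?; rewrite divr_gt0.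
set A := `|ln (s / r)|.
have A0 : 0 <= A by rewrite normr_ge0.
have lsr : ln (s / r) <= A by rewrite ler_norm.
have lrs : ln (r / s) <= A.
  by rewrite -invf_div lnV ?posrE ?pos // /A -normrN ler_norm.
suff H : d * `|ln (L / d)| <= 12 * r + r * A.
  rewrite mulrDr mulr1; nra.
have [Ld|Ld] := leP d L.
  rewrite ger0_norm; last by apply: ln_ge0; rewrite ler_pdivlMr // mul1r.
  have [sr|sr] := leP s r.
    have h1 : ln (L / d) <= ln (5 * r / d).
      apply: lnle; first exact: pos.
      by rewrite ler_pM2r ?invr_gt0 //; lra.
    have h2 := ln_sublinear (pos _ _ (mulr_gt0 (ltr0n _ 5) r0) d0).
    have h3 : d * (5 * r / d) = 5 * r by rewrite mulrC mulfVK // gt_eqF.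
    have : d * ln (L / d) <= d * (5 * r / d).
      by apply: ler_wpM2l; [exact: ltW | lra].
    nra.
  have h1 : ln (L / d) <= ln (5 * r / d) + ln (s / r).
    rewrite -lnM ?posrE ?pos ?mulr_gt0 //.
    apply: lnle; first exact: pos.
    have -> : 5 * r / d * (s / r) = 5 * s / d by field; rewrite !gt_eqF.
    by rewrite ler_pM2r ?invr_gt0 //; lra.
  have h2 := ln_sublinear (pos _ _ (mulr_gt0 (ltr0n _ 5) r0) d0).
  have h3 : d * (5 * r / d) = 5 * r by rewrite mulrC mulfVK // gt_eqF.
  have : d * ln (L / d) <= d * (5 * r / d + A).
    by apply: ler_wpM2l; [exact: ltW | lra].
  rewrite mulrDr h3 => h4.
  have : d * A <= r * A by apply: ler_wpM2r.
  lra.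
rewrite ltr0_norm; last by apply: ln_lt0; rewrite divr_gt0 //= ltr_pdivrMr // mul1r.
rewrite -lnV ?posrE ?pos // invf_div.
have [rd|rd] := leP d rho.
  have : Num.min d rho = d by apply/min_idPl.
  move=> hm; rewrite hm in hL1.
  have h1 : ln (d / L) <= ln 6.
    apply: lnle; first exact: pos.
    by rewrite ler_pdivrMr // -ler_pdivrMl //; lra.
  have h2 := ln_sublinear (ltr0n R 6).
  have : d * ln (d / L) <= d * 6 by apply: ler_wpM2l; [exact: ltW | lra].
  nra.
have : Num.min d rho = rho by apply/min_idPr; exact: ltW.
move=> hm; rewrite hm in hL1.
have h1 : ln (d / L) <= ln 12 + ln (r / s).
  rewrite -lnM ?posrE ?pos //.
  apply: lnle; first exact: pos.
  rewrite ler_pdivrMr //.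
  have -> : 12 * (r / s) * L = r * (12 * L / s) by field; rewrite gt_eqF.
  have X1 : 1 <= 12 * L / s by rewrite ler_pdivlMr // mul1r; lra.
  apply: le_trans dr _; rewrite ler_peMr //; exact: ltW.
have h2 := ln_sublinear (ltr0n R 12).
have : d * ln (d / L) <= d * (12 + A) by apply: ler_wpM2l; [exact: ltW | lra].
rewrite mulrDr => h4.
have : d * A <= r * A by apply: ler_wpM2r.
have : d * 12 <= r * 12 by apply: ler_wpM2r.
lra.
Qed.
Section Find.
Variable (R : realType) (n : nat).
Implicit Types (x y v w e z c : 'rV[R]_n) (D : set 'rV[R]_n).

Lemma enorm_unit v : dot v v = 1 -> enorm v = 1.
Proof. by move=> h; rewrite enormE h sqrtr1. Qed.

Lemma findb D z a0 c : (2 <= n)%N -> open D -> 0 < edist z a0 ->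
  (forall y, enorm (y - z) < edist z a0 -> D y) -> ~ D c ->
  exists b0, [/\ bdry D b0, Num.min (edist z a0) (enorm (c - a0)) / 6 <= enorm (b0 - a0)
    & enorm (b0 - a0) <= 2 * edist z a0 + enorm (c - a0)].
Proof.
move=> n2 oD d0 ball nDc.
set d := edist z a0 in d0 ball *.
set w := z - a0; set e := c - a0.
have dw : enorm w = d by [].
have w0 : w != 0 by apply/eqP => h; move: d0; rewrite -dw h enorm0 ltxx.
have [v [vv vw ev0 hspan]] := span2 e n2 w0.
have v1 := enorm_unit vv.
set p := z + (d / 2) *: v.
have Dp : D p.
  apply: ball; rewrite /p addrC addKr enormZ v1 mulr1 ger0_norm; last by rewrite divr_ge0 // ltW.
  lra.
have [t /andP[t0 t1] Bx] := exit oD Dp nDc.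
set x := p + t *: (c - p) in Bx.
exists x; set y := x - a0.
have ye : y = (1 - t) *: (w + (d / 2) *: v) + t *: e.
  by apply/rowP => j; rewrite /y /x /p /w /e !mxE; ring.
clearbody w e.
have wv : dot w v = 0 by rewrite dotC.
have hV : dot y v = (1 - t) * d / 2 + t * dot e v.
  by rewrite ye !(dotDl, dotZl) wv vv; ring.
have hU : dot y w = (1 - t) * (d * d) + t * dot e w.
  by rewrite ye !(dotDl, dotZl) vw -enorm_sq dw; ring.
split => //.
  apply: (@arith1 R d (enorm e) t (dot e v) (dot e w)) => //.
  - exact: enorm_ge0.
  - by rewrite t0 t1.
  - by rewrite -dw mulrC.
  - by rewrite -hV; have := dot_le y v; rewrite v1 mulr1.
  - by rewrite -hU -dw; exact: CS y w.
rewrite ye; apply: le_trans (enormD _ _) _.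
rewrite !enormZ (ger0_norm t0) ger0_norm ?subr_ge0 //.
have h1 : enorm (w + (d / 2) *: v) <= d + d / 2.
  apply: le_trans (enormD _ _) _; rewrite enormZ v1 mulr1 dw ger0_norm //.
  by rewrite divr_ge0 // ltW.
have : (1 - t) * enorm (w + (d / 2) *: v) <= (1 - t) * (d + d / 2).
  by apply: ler_wpM2l => //; rewrite subr_ge0.
have : t * enorm e <= enorm e by rewrite ler_piMl // enorm_ge0.
have := enorm_ge0 e.
nra.
Qed.
End Find.
Section Main.
Variable (R : realType) (n : nat).
Implicit Types (x y v w e z c : 'rV[R]_n) (D : set 'rV[R]_n).

Lemma far_ge D z a0 y : open D -> D z -> ~ D y ->
  (forall x, bdry D x -> edist z a0 <= edist z x) -> edist z a0 <= enorm (y - z).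
Proof.
move=> oD Dz nDy amin.
have [t /andP[t0 t1] Bx] := exit oD Dz nDy.
apply: le_trans (amin _ Bx) _.
rewrite /edist enormB addrAC subrr add0r enormZ ger0_norm //.
by rewrite ler_piMl // enorm_ge0.
Qed.

End Main.

Unset Implicit Arguments.
Theorem lemma2 (R : realType) :
  exists C0 : R, 0 < C0 /\
  forall (n : nat) (D : set 'rV[R]_n) (z : 'rV[R]_n),
    (2 <= n)%N -> open D -> connected D -> D !=set0 ->
    (exists a b, a != b /\ ~ D a /\ ~ D b) ->
    D z ->
    lam'' D z <= lam' D z /\ lam' D z <= lam D z /\ lam D z <= C0 * lam'' D z /\
    lam D z <= (dist_bdry D z)^-1.
Proof.
exists 20; split => // n D z n2 oD _ _ [a [b [ab [nDa nDb]]]] Dz.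
have [t _ Bt] := exit oD Dz nDa.
have [a0 [Ba0 amin]] := nearest z (ex_intro _ _ Bt).
have dE : dist_bdry D z = edist z a0.
  rewrite /dist_bdry (_ : ereal_inf _ = (edist z a0)%:E) //.
  apply/le_anti/andP; split.
    by apply: ereal_inf_lbound; exists a0.
  by apply: le_ereal_inf_tmp => _ [y By <-]; rewrite lee_fin; exact: amin.
set d := edist z a0 in dE amin *.
have d0 : 0 < d.
  have [e e0 He] := open_enorm oD Dz.
  apply: lt_le_trans e0 _; rewrite /d /edist enormB leNgt; apply/negP => h.
  exact: (bdry_notD oD Ba0) (He _ h).
have fg y : ~ D y -> d <= enorm (y - z) by move=> nDy; exact: far_ge oD Dz nDy amin.
have ball y : enorm (y - z) < d -> D y.
  by move=> h; apply: contrapT => /fg; rewrite leNgt h.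
have key a' b' : ~ D a' -> ~ D b' -> a' != b' -> exists b0, bdry D b0 /\ b0 != a0 /\
   d * (1 + `|ln (edist a0 b0 / d)|) <=
   20 * (edist z a' * (1 + `|ln (edist a' b' / edist z a')|)).
  move=> nDa' nDb' ab'.
  set r := edist z a'; set s := edist a' b'.
  have dr : d <= r by rewrite /r /edist enormB; exact: fg.
  have s0 : 0 < s.
    rewrite /s /edist lt_def enorm_ge0 andbT; apply/eqP => /enorm_eq0 /eqP.
    by rewrite subr_eq0; apply/negP.
  have tri1 := enormD (a' - a0) (a0 - b').
  rewrite (_ : a' - a0 + (a0 - b') = a' - b') in tri1; last by rewrite addrA subrK.
  have tri2 := enormD (a' - z) (z - a0).
  rewrite (_ : a' - z + (z - a0) = a' - a0) in tri2; last by rewrite addrA subrK.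
  have tri3 := enormD (b' - a') (a' - a0).
  rewrite (_ : b' - a' + (a' - a0) = b' - a0) in tri3; last by rewrite addrA subrK.
  have hr : enorm (a' - z) = r by rewrite /r /edist enormB.
  have hs : enorm (a' - b') = s by [].
  have hs' : enorm (b' - a') = s by rewrite enormB.
  have hd : enorm (z - a0) = d by [].
  have hb' : enorm (a0 - b') = enorm (b' - a0) by rewrite enormB.
  have [c [nDc hc1 hc2]] : exists c, [/\ ~ D c, s / 2 <= enorm (c - a0) & enorm (c - a0) <= 2 * r + s].
    have [ha|ha] := leP (s / 2) (enorm (a' - a0)).
      by exists a'; split => //; lra.
    by exists b'; split => //; lra.
  have [b0 [Bb0 hL1 hL2]] := findb n2 oD d0 ball nDc.
  exists b0; split => //.
  have L0 : 0 < enorm (b0 - a0).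
    apply: lt_le_trans hL1; rewrite divr_gt0 // lt_min d0 /=; lra.
  split.
    by apply/eqP => h; move: L0; rewrite h subrr enorm0 ltxx.
  rewrite (_ : edist a0 b0 = enorm (b0 - a0)); last by rewrite /edist enormB.
  by apply: (@arith2 R d r s (enorm (c - a0))).
have Qlow a' b' : ~ D a' -> ~ D b' -> (d%:E <= Qf z a' b')%E.
  move=> nDa' _; rewrite /Qf; case: eqP => _; first by rewrite leey.
  rewrite lee_fin; apply: le_trans (_ : edist z a' <= _).
    by rewrite /edist enormB; exact: fg.
  rewrite ler_peMr ?lerDl ?normr_ge0 //.
  by apply: le_trans (ltW d0) _; rewrite /edist enormB; exact: fg.
have s1 : (inv_lam D z <= inv_lam' D z)%E.
  apply: ereal_inf_le_tmp => _ [pq [h1 h2] <-]; exists pq => //.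
  by split; apply: bdry_notD oD _.
have s2 : (inv_lam' D z <= inv_lam'' D z)%E.
  by apply: ereal_inf_le_tmp => _ [pq [h1 [h2 _]] <-]; exists pq.
have hI : (d%:E <= inv_lam D z)%E.
  by apply: le_ereal_inf_tmp => _ [[a' b'] [h1 h2] <-]; exact: Qlow.
have up'' a' b' : ~ D a' -> ~ D b' -> a' != b' -> exists Q0 : R,
    (inv_lam'' D z <= Q0%:E)%E /\
    Q0 <= 20 * (edist z a' * (1 + `|ln (edist a' b' / edist z a')|)).
  move=> h1 h2 h3; have [b0 [Bb0 [b0a0 Hb0]]] := key a' b' h1 h2 h3.
  exists (d * (1 + `|ln (edist a0 b0 / d)|)); split => //.
  apply: ereal_inf_lbound; exists (a0, b0) => //=.
  by rewrite /Qf eq_sym (negbTE b0a0).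
have [Q0 [fin _]] := up'' a b nDa nDb ab.
have [I EI] : exists I, inv_lam D z = I%:E.
  case E: (inv_lam D z) => [J||]; first by exists J.
    by move: (le_trans (le_trans s1 s2) fin); rewrite E.
  by move: hI; rewrite E.
have [I' EI'] : exists I, inv_lam' D z = I%:E.
  case E: (inv_lam' D z) => [J||]; first by exists J.
    by move: (le_trans s2 fin); rewrite E.
  by move: (le_trans hI s1); rewrite E.
have [I'' EI''] : exists I, inv_lam'' D z = I%:E.
  case E: (inv_lam'' D z) => [J||]; first by exists J.
    by move: fin; rewrite E.
  by move: (le_trans hI (le_trans s1 s2)); rewrite E.
rewrite EI in s1 hI; rewrite EI' in s1 s2; rewrite EI'' in s2.
rewrite !lee_fin in s1 s2 hI.
have main : I'' / 20 <= I.
  rewrite -lee_fin -EI; apply: le_ereal_inf_tmp => _ [[a' b'] [h1 h2] <-] /=.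
  rewrite /Qf; case: eqP => [_|/eqP ne]; first by rewrite leey.
  have [Q1 [f1 f2]] := up'' a' b' h1 h2 ne.
  rewrite EI'' lee_fin in f1; rewrite lee_fin; lra.
rewrite /lam /lam' /lam'' EI EI' EI'' /= dE.
have Ip : 0 < I by lra.
have Ip' : 0 < I' by lra.
have Ip'' : 0 < I'' by lra.
split; first by rewrite lef_pV2 ?posrE.
split; first by rewrite lef_pV2 ?posrE.
split; last by rewrite lef_pV2 ?posrE.
have -> : 20 * I''^-1 = (I'' / 20)^-1 by rewrite invf_div mulrC.
by rewrite lef_pV2 ?posrE // divr_gt0.
Qed.
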